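(* Suppose Assumptions (A1), (A2) and (SC) hold. Then for every $x\in\mathcal{X}$ and $t>0$, $$\|y_t^*(x)-y^*(x)\|\le\sqrt{\frac{2}{\mu_g}kt}.$$
   Context: Let $f,g,h_1,\dots,h_k:\mathbb{R}^n\times\mathbb{R}^m\to\mathbb{R}$ and $\mathcal{X}\subseteq\mathbb{R}^n$. For $x\in\mathcal{X}$ let $\mathcal{Y}(x)=\{y: h_i(x,y)\le 0,\ i=1,\dots,k\}$ and $y^*(x)=\arg\min_{y\in\mathcal{Y}(x)} g(x,y)$. For $t>0$ let $\widetilde g_t(x,y)=g(x,y)-t\sum_{i=1}^k\log(-h_i(x,y))$ (defined when all $h_i(x,y)<0$) and $y_t^*(x)=\arg\min_y\widetilde g_t(x,y)$. Assumptions: (A1) $f$ once and $g,h_i$ twice continuously differentiable; (A2) $\mathcal{X}$ convex and compact and for every $x\in\mathcal{X}$ there is $y$ with $h_i(x,y)<0$ for all $i$; (SC) for every $x\in\mathcal{X}$, $g(x,\cdot)$ is $\mu_g$-strongly convex and each $h_i(x,\cdot)$ is convex. *)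

(* Defs.v *)
From HB Require Import structures.
From mathcomp Require Import all_boot all_order all_algebra.
From mathcomp Require Import all_classical all_reals all_analysis.
Set Implicit Arguments. Unset Strict Implicit. Unset Printing Implicit Defensive.
Import Order.TTheory GRing.Theory Num.Theory.
Import numFieldNormedType.Exports.
Local Open Scope classical_set_scope.
Local Open Scope ring_scope.

Section Defs.
Variable R : realType.

Definition enorm (m : nat) (v : 'rV[R]_m) : R :=
  Num.sqrt (\sum_(i < m) (v ord0 i) ^+ 2).

(* Continuously differentiable (finite-dimensional domain): differentiable
   everywhere and every directional derivative p |-> dF(p) v is continuous. *)
Definition C1 (V : normedModType R) (F : V -> R) : Prop :=
  (forall p, differentiable F p) /\ (forall v : V, continuous (fun p => 'd F p v)).

Definition C2 (V : normedModType R) (F : V -> R) : Prop :=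
  C1 F /\ (forall v : V, C1 (fun p => 'd F p v)).

Definition uncurry2 (n m : nat) (F : 'rV[R]_n -> 'rV[R]_m -> R)
  : 'rV[R]_n * 'rV[R]_m -> R := fun p => F p.1 p.2.

Definition convex_setR (n : nat) (X : set 'rV[R]_n) : Prop :=
  forall a b, X a -> X b -> forall l : R, 0 <= l <= 1 -> X (l *: a + (1 - l) *: b).

Definition convex_funR (m : nat) (G : 'rV[R]_m -> R) : Prop :=
  forall a b (l : R), 0 <= l <= 1 ->
    G (l *: a + (1 - l) *: b) <= l * G a + (1 - l) * G b.

Definition strongly_convex (m : nat) (mu : R) (G : 'rV[R]_m -> R) : Prop :=
  forall a b (l : R), 0 <= l <= 1 ->
    G (l *: a + (1 - l) *: b) <=
      l * G a + (1 - l) * G b - mu / 2 * l * (1 - l) * (enorm (a - b)) ^+ 2.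

Definition feas (n m k : nat) (h : 'I_k -> 'rV[R]_n -> 'rV[R]_m -> R) x : set 'rV[R]_m :=
  [set y | forall i, h i x y <= 0].
Definition sfeas (n m k : nat) (h : 'I_k -> 'rV[R]_n -> 'rV[R]_m -> R) x : set 'rV[R]_m :=
  [set y | forall i, h i x y < 0].

(* log-barrier function g~_t (meaningful on the strictly feasible set) *)
Definition gbar (n m k : nat) (g : 'rV[R]_n -> 'rV[R]_m -> R)
  (h : 'I_k -> 'rV[R]_n -> 'rV[R]_m -> R) (t : R) x y : R :=
  g x y - t * \sum_(i < k) ln (- h i x y).

Definition is_argmin (m : nat) (G : 'rV[R]_m -> R) (S : set 'rV[R]_m) y : Prop :=
  S y /\ forall z, S z -> G y <= G z.

End Defs.

(* Main.v *)
Require Import Defs.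
From HB Require Import structures.
From mathcomp Require Import all_boot all_order all_algebra.
From mathcomp Require Import all_classical all_reals all_analysis.
From mathcomp Require Import ring lra.
Import Order.TTheory GRing.Theory Num.Theory.
Import numFieldNormedType.Exports.
Local Open Scope classical_set_scope.
Local Open Scope ring_scope.

Lemma ln34_ge (R : realType) : - (1/3 : R) <= ln (3/4 : R).
Proof.
have h1 : ln (3/4 : R) + ln (4/3) = 0.
  rewrite -lnM; last 2 first.
  - by rewrite posrE; apply: divr_gt0.
  - by rewrite posrE; apply: divr_gt0.
  have -> : (3/4 : R) * (4/3) = 1 by field.
  exact: ln1.
have h2 : ln (4/3 : R) <= 1/3.
  have -> : (4/3 : R) = 1 + 1/3 by field.
  apply: le_ln1Dx. lra.
lra.
Qed.

Theorem lemma6 (R : realType) (n m k : nat)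
  (f g : 'rV[R]_n -> 'rV[R]_m -> R) (h : 'I_k -> 'rV[R]_n -> 'rV[R]_m -> R)
  (X : set 'rV[R]_n) (mu_g : R) :
  (* (A1) *)
  C1 (uncurry2 f) -> C2 (uncurry2 g) -> (forall i, C2 (uncurry2 (h i))) ->
  (* (A2) *)
  convex_setR X -> compact X ->
  (forall x, X x -> exists y, forall i, h i x y < 0) ->
  (* (SC) *)
  0 < mu_g ->
  (forall x, X x -> strongly_convex mu_g (g x)) ->
  (forall x, X x -> forall i, convex_funR (h i x)) ->
  forall x, X x -> forall t : R, 0 < t ->
  forall ystar yt : 'rV[R]_m,
    is_argmin (g x) (feas h x) ystar ->
    is_argmin (gbar g h t x) (sfeas h x) yt ->
    enorm (yt - ystar) <= Num.sqrt (2 / mu_g * k%:R * t).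
Proof.
move=> _ _ _ _ _ _ mu0 sc hc x Xx t t0 ystar yt [Fs Os] [Ft Ot].
set d := enorm (yt - ystar).
have l1 : 0 <= (1/4 : R) <= 1 by apply/andP; split; lra.
have l3 : 0 <= (3/4 : R) <= 1 by apply/andP; split; lra.
set z := (1/4 : R) *: yt + (1 - 1/4) *: ystar.
set w := (3/4 : R) *: yt + (1 - 3/4) *: ystar.
have Fz : feas h x z.
  move=> i; apply: le_trans (hc x Xx i _ _ _ l1) _.
  have := Ft i; have := Fs i; lra.
have Sw : sfeas h x w.
  move=> i; apply: le_lt_trans (hc x Xx i _ _ _ l3) _.
  have := Ft i; have := Fs i; lra.
have hw : forall i, (3/4) * (- h i x yt) <= - h i x w.
  move=> i; have := hc x Xx i yt ystar _ l3; have := Fs i; rewrite -/w; lra.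
have A1 := Os z Fz.
have A2 := sc x Xx yt ystar _ l1; rewrite -/z -/d in A2.
have A3 := sc x Xx yt ystar _ l3; rewrite -/w -/d in A3.
have B := Ot w Sw; rewrite /gbar in B.
have Ftz : feas h x yt by move=> i; apply/ltW/Ft.
have A0 := Os yt Ftz.
have L : k%:R * ln (3/4 : R) + \sum_(i < k) ln (- h i x yt) <= \sum_(i < k) ln (- h i x w).
  have -> : k%:R * ln (3/4 : R) = \sum_(i < k) ln (3/4 : R) by rewrite sumr_const card_ord mulr_natl.
  rewrite -big_split /=.
  apply: ler_sum => i _.
  rewrite -lnM; last 2 first.
  - by rewrite posrE; apply: divr_gt0.
  - by rewrite posrE oppr_gt0; apply: Ft.
  rewrite ler_ln.
  - exact: hw.
  - by rewrite posrE; apply: mulr_gt0; [apply: divr_gt0 | rewrite oppr_gt0; apply: Ft].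
  - by rewrite posrE oppr_gt0; apply: Sw.
have LN := ln34_ge R.
set S1 := \sum_(i < k) ln (- h i x yt) in L B.
set S2 := \sum_(i < k) ln (- h i x w) in L B.
have kge : (0 : R) <= k%:R by [].
have L2 : t * (k%:R * ln (3/4 : R)) >= - (t * k%:R / 3).
  rewrite mulrA. have := ler_wpM2l (mulr_ge0 (ltW t0) kge) LN. lra.
have key : mu_g * d ^+ 2 <= 2 * (k%:R * t).
  have Lt := ler_wpM2l (ltW t0) L.
  rewrite mulrDr in Lt.
  set D := d ^+ 2 in A2 A3 *.
  have M : mu_g / 2 * (1 / 4) * (1 - 1 / 4) * D = 3/32 * (mu_g * D) by field.
  have M3 : mu_g / 2 * (3 / 4) * (1 - 3 / 4) * D = 3/32 * (mu_g * D) by field.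
  rewrite M in A2; rewrite M3 in A3.
  lra.
have d0 : 0 <= d by apply: sqrtr_ge0.
have c0 : 0 <= 2 / mu_g * k%:R * t.
  by apply: mulr_ge0; [apply: mulr_ge0; [apply: divr_ge0; [|apply: ltW]|] | apply: ltW].
rewrite -(ger0_norm d0) -sqrtr_sqr ler_sqrt //.
have -> : 2 / mu_g * k%:R * t = (2 * (k%:R * t)) / mu_g by field; apply/lt0r_neq0.
by rewrite ler_pdivlMr // mulrC.
Qed.
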